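(* Let $\mathcal S$ be an $\epsilon$-sample of $\mathcal C$ with $0<\epsilon\le1$. Let $a,b\in\mathcal S$ with $a\to b$ and let $p\in(a,b)$. Then $d_p=\min\{d(p,a),d(p,b)\}$, and $d_p<d(p,s)$ for all $s\in\mathcal S\setminus\{a,b\}$.
   Context: $\mathcal C\subset\mathbb R^d$ ($d\ge2$) is a finite union of pairwise disjoint closed curves (images of injective continuous maps $S^1\to\mathbb R^d$); $\mathcal S\subset\mathcal C$ is finite. The medial axis $\mathcal M$ is the set of points with no unique closest point in $\mathcal C$, $\mathrm{lfs}(p)=d(p,\mathcal M)$, and $\mathcal S$ is an $\epsilon$-sample if $d(p,\mathcal S)<\epsilon\,\mathrm{lfs}(p)$ for all $p\in\mathcal C$. For $p\in\mathcal C$, $d_p=d(p,\mathcal S)$. For sample points, $a\to b$ means: for a chosen orientation of the component of $\mathcal C$ containing $a,b$, moving from $a$ along the orientation, the next sample point met is $b$. With this orientation, $(a,b)$ denotes the open arc from $a$ to $b$ along the orientation. *)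

(* Defs.v *)
From HB Require Import structures.
From mathcomp Require Import all_boot all_order all_algebra.
From mathcomp Require Import all_classical all_reals all_analysis.
Set Implicit Arguments. Unset Strict Implicit. Unset Printing Implicit Defensive.
Import Order.TTheory GRing.Theory Num.Theory.
Import numFieldNormedType.Exports.
Local Open Scope classical_set_scope.
Local Open Scope ring_scope.

Definition eucl_dist (R : realType) (d : nat) (x y : 'rV[R]_d) : R :=
  Num.sqrt (\sum_(i < d) (x ord0 i - y ord0 i) ^+ 2).

Definition dist_to (R : realType) (d : nat) (x : 'rV[R]_d) (A : set 'rV[R]_d) : R :=
  inf [set eucl_dist x y | y in A].

Definition closest (R : realType) (d : nat) (C : set 'rV[R]_d) (x c : 'rV[R]_d) : Prop :=
  C c /\ forall y, C y -> eucl_dist x c <= eucl_dist x y.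

Definition medial_axis (R : realType) (d : nat) (C : set 'rV[R]_d) : set 'rV[R]_d :=
  [set x | ~ (exists! c, closest C x c)].

(* local feature size lfs(p) = d(p, M), extended-real valued (+oo if M empty) *)
Definition lfs (R : realType) (d : nat) (C : set 'rV[R]_d) (p : 'rV[R]_d) : \bar R :=
  ereal_inf [set (eucl_dist p m)%:E | m in medial_axis C].

Definition eps_sample (R : realType) (d : nat) (C S : set 'rV[R]_d) (eps : R) : Prop :=
  forall p, C p -> ((dist_to p S)%:E < eps%:E * lfs C p)%E.

(* a closed curve = image of an injective continuous map S^1 -> R^d, given as a
   continuous 1-periodic map R -> R^d that is injective on [0,1).
   The direction of the parametrization is the chosen orientation. *)
Definition closed_curve (R : realType) (d : nat) (g : R -> 'rV[R]_d) : Prop :=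
  continuous g /\ (forall t, g (t + 1) = g t) /\
  (forall s t, 0 <= s < 1 -> 0 <= t < 1 -> g s = g t -> s = t).

(* Main.v *)
Require Import Defs.
From HB Require Import structures.
From mathcomp Require Import all_boot all_order all_algebra.
From mathcomp Require Import all_classical all_reals all_analysis.
From mathcomp Require Import ring lra zify.
Import Order.TTheory GRing.Theory Num.Theory.
Import numFieldNormedType.Exports.
Local Open Scope classical_set_scope.
Local Open Scope ring_scope.
Set Implicit Arguments. Unset Strict Implicit.
Section Ed.
Variables (R : realType) (d : nat).
Local Notation ed := (@eucl_dist R d).
Implicit Types x y z : 'rV[R]_d.

Lemma ed_ge0 x y : 0 <= ed x y.
Proof. exact: sqrtr_ge0. Qed.

Lemma ed_sym x y : ed x y = ed y x.
Proof. rewrite /eucl_dist; congr Num.sqrt; apply: eq_bigr => i _.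
by rewrite -opprB sqrrN. Qed.

Lemma ed_xx x : ed x x = 0.
Proof. rewrite /eucl_dist big1 ?sqrtr0 // => i _; by rewrite subrr expr0n. Qed.

Lemma ed_eq0 x y : ed x y = 0 -> x = y.
Proof.
rewrite /eucl_dist => /eqP; rewrite sqrtr_eq0 => H.
have H0 : \sum_(i < d) (x ord0 i - y ord0 i) ^+ 2 = 0.
  apply/eqP; rewrite eq_le H /=; apply: sumr_ge0 => i _; exact: sqr_ge0.
apply/rowP => i.
have := (psumr_eq0P (fun j _ => sqr_ge0 (x ord0 j - y ord0 j)) H0 (i:=i) isT).
by move/eqP; rewrite sqrf_eq0 subr_eq0 => /eqP.
Qed.

Lemma cauchy_schwarz (a b : 'I_d -> R) :
  (\sum_i a i * b i) ^+ 2 <= (\sum_i a i ^+ 2) * (\sum_i b i ^+ 2).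
Proof.
have H : 0 <= \sum_i \sum_j (a i * b j - a j * b i) ^+ 2.
  by apply: sumr_ge0 => i _; apply: sumr_ge0 => j _; exact: sqr_ge0.
have E1 : (\sum_i a i * b i) ^+ 2 = \sum_i \sum_j (a i * b i) * (a j * b j).
  by rewrite expr2 mulr_suml; apply: eq_bigr => i _; rewrite mulr_sumr.
have E2 : (\sum_i a i ^+ 2) * (\sum_i b i ^+ 2) = \sum_i \sum_j a i ^+ 2 * b j ^+ 2.
  by rewrite mulr_suml; apply: eq_bigr => i _; rewrite mulr_sumr.
have E3 : \sum_i \sum_j a i ^+ 2 * b j ^+ 2 = \sum_i \sum_j a j ^+ 2 * b i ^+ 2.
  by rewrite exchange_big.
have E4 : \sum_i \sum_j (a i * b j - a j * b i) ^+ 2 =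
   \sum_i \sum_j a i ^+ 2 * b j ^+ 2 + \sum_i \sum_j a j ^+ 2 * b i ^+ 2
   - 2%:R * \sum_i \sum_j (a i * b i) * (a j * b j).
  rewrite -big_split /= mulr_sumr -sumrN -big_split /=; apply: eq_bigr => i _.
  rewrite -big_split /= mulr_sumr -sumrN -big_split /=; apply: eq_bigr => j _.
  by rewrite sqrrB !exprMn; ring.
rewrite E1 E2; move: H; rewrite E4 -E3; lra.
Qed.

Lemma ed_triangle x y z : ed x z <= ed x y + ed y z.
Proof.
rewrite /eucl_dist.
set a := fun i => x ord0 i - y ord0 i.
set b := fun i => y ord0 i - z ord0 i.
have -> : \sum_(i < d) (x ord0 i - z ord0 i) ^+ 2 = \sum_i (a i + b i) ^+ 2.
  by apply: eq_bigr => i _; rewrite /a /b; congr (_ ^+ 2); ring.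
set A := \sum_i a i ^+ 2; set B := \sum_i b i ^+ 2.
have A0 : 0 <= A by apply: sumr_ge0 => i _; exact: sqr_ge0.
have B0 : 0 <= B by apply: sumr_ge0 => i _; exact: sqr_ge0.
have E : \sum_i (a i + b i) ^+ 2 = A + 2%:R * (\sum_i a i * b i) + B.
  rewrite /A /B mulr_sumr -!big_split /=; apply: eq_bigr => i _; ring.
have CS : \sum_i a i * b i <= Num.sqrt A * Num.sqrt B.
  rewrite -sqrtrM //; apply: le_trans (ler_norm _) _.
  rewrite -sqrtr_sqr; rewrite ler_sqrt; last by apply: mulr_ge0.
  exact: cauchy_schwarz.
have S0 : 0 <= Num.sqrt A + Num.sqrt B by apply: addr_ge0; exact: sqrtr_ge0.
rewrite -(ger0_norm S0) -sqrtr_sqr ler_sqrt; last exact: sqr_ge0.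
rewrite E sqrrD !sqr_sqrtr //; lra.
Qed.

Lemma ed_scale x y (u v : 'rV[R]_d) (c : R) :
  (forall i, x ord0 i - y ord0 i = c * (u ord0 i - v ord0 i)) ->
  ed x y = `|c| * ed u v.
Proof.
move=> H; rewrite /eucl_dist.
have -> : \sum_(i < d) (x ord0 i - y ord0 i) ^+ 2 =
   c ^+ 2 * \sum_(i < d) (u ord0 i - v ord0 i) ^+ 2.
  by rewrite mulr_sumr; apply: eq_bigr => i _; rewrite H exprMn.
by rewrite sqrtrM ?sqr_ge0 // sqrtr_sqr.
Qed.

End Ed.
Section P2.
Variables (R : realType) (d : nat).
Local Notation ed := (@eucl_dist R d).

Lemma dist_closest (E : set 'rV[R]_d) y c : closest E y c -> dist_to y E = ed y c.
Proof.
move=> [Ec Hc]; rewrite /dist_to; apply/eqP; rewrite eq_le; apply/andP; split.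
  apply: ge_inf; last by exists c.
  by exists 0 => _ [z _ <-]; exact: sqrtr_ge0.
apply: lb_le_inf; first by exists (ed y c), c.
by move=> _ [z Ez <-]; exact: Hc.
Qed.

Lemma lip_continuous (f : R -> R) (K : R) :
  (forall x y, `|f x - f y| <= K * `|x - y|) -> continuous f.
Proof.
move=> H x; apply/cvgrPdist_lt => e e0.
have K0 : 0 <= K.
  have := H x (x + 1); rewrite opprD addrA subrr sub0r normrN normr1 mulr1.
  exact: le_trans (normr_ge0 _).
have K1 : 0 < K + 1 by lra.
near=> y.
apply: (le_lt_trans (H x y)).
have : `|x - y| < e / (K + 1).
  near: y; apply: (@cvgr_dist_lt _ R _ _ _ id x); [exact: cvg_id | by rewrite divr_gt0].
move=> Hy.
apply: (@le_lt_trans _ _ (K * (e / (K + 1)))).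
  by apply: ler_wpM2l => //; apply: ltW.
rewrite mulrA ltr_pdivrMr //; nra.
Unshelve. all: by end_near.
Qed.

Lemma continuous_sum_seq (I : Type) (r : seq I) (F : I -> R -> R) :
  (forall i, continuous (F i)) -> continuous (fun u => \sum_(i <- r) F i u).
Proof.
move=> HF; elim: r => [|i r IH].
  have -> : (fun u : R => \sum_(i <- [::]) F i u) = fun=> 0.
    by apply: funext => u; rewrite big_nil.
  by move=> x; exact: cst_continuous.
have -> : (fun u => \sum_(j <- i :: r) F j u) = F i + (fun u => \sum_(j <- r) F j u).
  by apply: funext => u; rewrite big_cons.
by move=> x; apply: continuousD; [exact: HF | exact: IH].
Qed.

Lemma ed_continuous (g : R -> 'rV[R]_d) y :
  continuous g -> continuous (fun u => ed y (g u)).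
Proof.
move=> cg x; rewrite /eucl_dist.
apply: (@continuous_comp _ _ _ (fun u => \sum_(i < d) (y ord0 i - g u ord0 i) ^+ 2)).
  apply: (@continuous_sum_seq _ _ (fun i u => (y ord0 i - g u ord0 i) ^+ 2)) => i z.
  rewrite /=.
  have ci : continuous (fun u => y ord0 i - g u ord0 i).
    move=> w; apply: continuousB; first exact: cst_continuous.
    apply: (@continuous_comp _ _ _ g (fun M : 'rV[R]_d => M ord0 i)); first exact: cg.
    exact: (@coord_continuous R 1 d ord0 i).
  have -> : (fun u => (y ord0 i - g u ord0 i) ^+ 2) =
    (fun u => y ord0 i - g u ord0 i) \* (fun u => y ord0 i - g u ord0 i).
    by apply: funext => u; rewrite /= expr2.
  exact: (continuousM (ci z) (ci z)).
exact: sqrt_continuous.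
Qed.

Definition has_closest (E : set 'rV[R]_d) :=
  forall y, exists c, closest E y c.

Lemma closest_itv (g : R -> 'rV[R]_d) (al be : R) :
  continuous g -> al <= be -> has_closest (g @` `[al, be]).
Proof.
move=> cg ab y.
have [c cI Hc] := EVT_min ab (continuous_subspaceT (@ed_continuous g y cg)).
exists (g c); split; first by exists c.
by move=> _ [u uI <-]; exact: Hc.
Qed.

Lemma closest_U (E1 E2 : set 'rV[R]_d) y c1 c2 :
  closest E1 y c1 -> closest E2 y c2 -> exists c, closest (E1 `|` E2) y c.
Proof.
move=> [E1c H1] [E2c H2].
have [le|lt] := leP (ed y c1) (ed y c2).
  exists c1; split; first by left.
  by move=> z [/H1|/H2] //; apply: le_trans.
exists c2; split; first by right.
by move=> z [/H1|/H2] // => h; apply: le_trans (ltW lt) h.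
Qed.

Lemma closest_sub (E1 E2 : set 'rV[R]_d) y c :
  E1 = E2 -> closest E1 y c -> closest E2 y c.
Proof. by move=> ->. Qed.

End P2.
Section P3.
Variables (R : realType) (d : nat) (g : R -> 'rV[R]_d).
Hypothesis gper : forall t, g (t + 1) = g t.

Lemma per_nat t (n : nat) : g (t + n%:R) = g t.
Proof.
elim: n => [|n IH]; first by rewrite addr0.
by rewrite -natr1 addrA gper IH.
Qed.

Lemma per_int t (n : int) : g (t + n%:~R) = g t.
Proof.
case: n => n.
  by rewrite -pmulrn per_nat.
rewrite NegzE mulrNz.
by rewrite -(per_nat (t + - (n.+1)%:~R) n.+1) -addrA addNr addr0.
Qed.

Lemma per_reduce u c : exists v, c <= v < c + 1 /\ g u = g v.
Proof.
exists (u - (Num.floor (u - c))%:~R); split.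
  have h1 := floor_le (u - c); have h2 := floorD1_gt (u - c).
  rewrite intrD in h2; apply/andP; split; lra.
by rewrite -intrN per_int.
Qed.

Lemma per_inj (hinj : forall s t, 0 <= s < 1 -> 0 <= t < 1 -> g s = g t -> s = t)
  c s t : c <= s < c + 1 -> c <= t < c + 1 -> g s = g t -> s = t.
Proof.
move=> hs ht hst.
set s' := s - (Num.floor s)%:~R; set t' := t - (Num.floor t)%:~R.
have hs' : 0 <= s' < 1.
  have h1 := floor_le s; have h2 := floorD1_gt s; rewrite intrD in h2.
  rewrite /s'; apply/andP; split; lra.
have ht' : 0 <= t' < 1.
  have h1 := floor_le t; have h2 := floorD1_gt t; rewrite intrD in h2.
  rewrite /t'; apply/andP; split; lra.
have e : s' = t'.
  apply: hinj => //.
  by rewrite /s' /t' -!intrN !per_int.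
have ez : s - t = (Num.floor s - Num.floor t)%:~R.
  rewrite intrB; move: e; rewrite /s' /t'; lra.
set z := Num.floor s - Num.floor t in ez.
have z1 : z%:~R < 1 :> R by rewrite -ez; case/andP: hs => ? ?; case/andP: ht => ? ?; lra.
have z2 : -1 < z%:~R :> R by rewrite -ez; case/andP: hs => ? ?; case/andP: ht => ? ?; lra.
have : z = 0.
  move: z1 z2; rewrite -[1 : R]/(1%:~R) -[-1 : R]/((-1)%:~R) !ltr_int; lia.
move=> z0; move: ez; rewrite z0 => /eqP; rewrite subr_eq0 => /eqP; done.
Qed.

End P3.
Lemma closest_ext (R : realType) (d : nat) (E1 E2 : set 'rV[R]_d) y c :
  (forall z, E1 z <-> E2 z) -> closest E1 y c -> closest E2 y c.
Proof.
move=> H [E1c Hc]; split; first by apply/H.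
by move=> z /H; exact: Hc.
Qed.

Theorem lemma3p4 (R : realType) (d : nat) (hd : (2 <= d)%N)
  (m : nat) (gam : 'I_m -> R -> 'rV[R]_d)
  (hcurve : forall k, closed_curve (gam k))
  (hdisj : forall k l, k != l -> forall s t, gam k s <> gam l t)
  (C : set 'rV[R]_d) (hC : C = \bigcup_(k in [set: 'I_m]) range (gam k))
  (S : set 'rV[R]_d) (hSfin : finite_set S) (hSC : S `<=` C)
  (eps : R) (heps0 : 0 < eps) (heps1 : eps <= 1) (hsample : eps_sample C S eps)
  (k : 'I_m) (ta tb : R) (a b : 'rV[R]_d)
  (ha : a = gam k ta) (hb : b = gam k tb) (haS : S a) (hbS : S b)
  (htab : ta < tb <= ta + 1)
  (hnext : forall t, ta < t < tb -> ~ S (gam k t))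
  (t : R) (ht : ta < t < tb) (p : 'rV[R]_d) (hp : p = gam k t) :
  dist_to p S = Num.min (eucl_dist p a) (eucl_dist p b) /\
  (forall s, S s -> s <> a -> s <> b -> dist_to p S < eucl_dist p s).
Proof.
have gc : forall l, continuous (gam l) by move=> l; case: (hcurve l).
have gper : forall l u, gam l (u + 1) = gam l u by move=> l; case: (hcurve l) => _ [].
have ginj : forall l, forall s t, 0 <= s < 1 -> 0 <= t < 1 -> gam l s = gam l t -> s = t.
  by move=> l; case: (hcurve l) => _ [].
case/andP: htab => tab tba.
case/andP: ht => tat ttb.
set A := gam k @` `[ta, tb].
set D2 := [set z | exists l, l != k /\ (gam l @` `[0, 1]) z].
set D := gam k @` `[tb, ta + 1] `|` D2.
have hAC : A `<=` C by rewrite hC => _ [u _ <-]; exists k => //; exists u.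
have hDC : D `<=` C.
  rewrite hC => z [[u _ <-]|[l' [_ [u _ <-]]]]; [exists k => //; exists u | exists l' => //; exists u].
have hCAD : forall z, C z -> A z \/ D z.
  rewrite hC => z [l _ [u _ <-]].
  case: (eqVneq l k) => [->|lk].
    have [v [hv ->]] := per_reduce (gper k) u ta.
    case/andP: hv => hv1 hv2.
    case: (leP v tb) => vb.
      by left; exists v => //; rewrite /= in_itv /= hv1 vb.
    by right; left; exists v => //; rewrite /= in_itv /= (ltW vb) (ltW hv2).
  right; right; exists l; split => //.
  have [v [hv ->]] := per_reduce (gper l) u 0.
  case/andP: hv => hv1 hv2.
  by exists v => //; rewrite /= in_itv /= hv1 /= ltW // -[1](add0r 1).
have hAD : forall z, A z -> D z -> z = a \/ z = b.
  move=> z [u hu <-] [[v hv e]|[l [lk [w _ e]]]]; last first.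
    by exfalso; apply: (hdisj l k lk w u e).
  move: hu hv; rewrite /= !in_itv /= => /andP [hu1 hu2] /andP [hv1 hv2].
  have [->|nu1] := eqVneq u ta; first by left.
  have [->|nu2] := eqVneq u tb; first by right.
  have [ev|nv] := eqVneq v (ta + 1).
    by left; rewrite -e ev gper.
  have [ev|nv2] := eqVneq v tb; first by right; rewrite -e ev.
  exfalso.
  have : v = u.
    apply: (per_inj (gper k) (ginj k) (c := ta)) => //.
      by apply/andP; split; [lra | rewrite lt_neqAle nv hv2].
    apply/andP; split => //; lra.
  move=> vu; rewrite vu in hv1.
  have : u < tb by rewrite lt_neqAle nu2 hu2.
  lra.
have hnotab : forall u, ta < u < tb -> gam k u <> a /\ gam k u <> b.
  by move=> u hu; split => e; apply: (hnext u hu); rewrite e.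
have hpA : A p by rewrite hp; exists t => //; rewrite /= in_itv /= !ltW.
have hpD : ~ D p.
  move=> Dp; have hn : ta < t < tb by rewrite tat ttb.
  have [hn1 hn2] := hnotab t hn.
  by case: (hAD p hpA Dp) => e; [apply: hn1 | apply: hn2]; rewrite -hp.
have hsA : forall s, S s -> s <> a -> s <> b -> ~ A s.
  move=> s Ss sa sb [u hu e].
  move: hu; rewrite /= in_itv /= => /andP [hu1 hu2].
  have [eu|nu1] := eqVneq u ta; first by apply: sa; rewrite -e eu ha.
  have [eu|nu2] := eqVneq u tb; first by apply: sb; rewrite -e eu hb.
  apply: (hnext u); last by rewrite e.
  by rewrite !lt_neqAle eq_sym nu1 nu2 hu1 hu2.
have hasA : has_closest A by apply: closest_itv => //; exact: ltW.
have hasD : has_closest D.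
  move=> y.
  have [c1 h1] := closest_itv (gc k) tba y.
  suff: forall r : seq 'I_m, exists c, closest (gam k @` `[tb, ta + 1] `|`
      [set z | exists l, l \in r /\ l != k /\ (gam l @` `[0, 1]) z]) y c.
    move=> /(_ (enum 'I_m)) [c hc]; exists c; apply: closest_ext hc => z; split.
      by case=> [h|[l [_ h]]]; [left|right; exists l].
    by case=> [h|[l h]]; [left|right; exists l; rewrite mem_enum].
  elim => [|l r [c hc]].
    exists c1; apply: closest_ext h1 => z; split; first by left.
    by case=> // [[l []]].
  case: (eqVneq l k) => [lk|lk].
    exists c; apply: closest_ext hc => z; split.
      by case=> [h|[l' [h1' h2']]]; [left|right; exists l'; rewrite in_cons h1' orbT].
    case=> [h|[l' [h1' [h2' h3']]]]; [by left|right; exists l'; split => //].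
    by move: h1'; rewrite in_cons => /orP [/eqP e|//]; move: h2'; rewrite e lk eqxx.
  have [c2 h2] := closest_itv (gc l) ler01 y.
  have [c' hc'] := closest_U hc h2; exists c'; apply: closest_ext hc' => z; split.
    case=> [[h|[l' [h1' h2']]]|h]; [by left|right; exists l'|right; exists l].
      by rewrite in_cons h1' orbT.
    by rewrite mem_head.
  case=> [h|[l' [h1' [h2' h3']]]]; [by left; left|].
  move: h1'; rewrite in_cons => /orP [/eqP e|h1'']; first by right; rewrite -e.
  by left; right; exists l'.
set gA := fun y => dist_to y A.
set gD := fun y => dist_to y D.
have lip : forall (E : set 'rV[R]_d), has_closest E -> forall y z,
    `|dist_to y E - dist_to z E| <= eucl_dist y z.
  move=> E hE.
  have H : forall y z, dist_to y E <= eucl_dist y z + dist_to z E.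
    move=> y z; have [cy hy] := hE y; have [cz hz] := hE z.
    rewrite (dist_closest hy) (dist_closest hz).
    apply: le_trans (ed_triangle y z cz).
    by case: hy => _ ->; case: hz.
  move=> y z; rewrite ler_norml; have := H y z; have := H z y.
  rewrite (ed_sym z y); lra.
have dist0 : forall (E : set 'rV[R]_d), has_closest E -> forall y, E y -> dist_to y E = 0.
  move=> E hE y Ey; have [c hc] := hE y; rewrite (dist_closest hc).
  apply/eqP; rewrite eq_le ed_ge0 andbT; case: hc => _ /(_ y Ey).
  by rewrite ed_xx.
have distpos : forall (E : set 'rV[R]_d), has_closest E -> forall y, ~ E y -> 0 < dist_to y E.
  move=> E hE y Ey; have [c hc] := hE y; rewrite (dist_closest hc).
  rewrite lt_neqAle ed_ge0 andbT; apply/eqP => e.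
  case: hc => Ec _; apply: Ey; by rewrite (ed_eq0 (esym e)).
set dp := dist_to p S.
set m0 := Num.min (eucl_dist p a) (eucl_dist p b).
have lbS : has_lbound [set eucl_dist p y | y in S].
  by exists 0 => _ [z _ <-]; exact: ed_ge0.
have dp_le : forall y, S y -> dp <= eucl_dist p y.
  by move=> y Sy; apply: ge_inf => //; exists y.
have dp0 : 0 <= dp.
  by apply: lb_le_inf; [exists (eucl_dist p a), a | move=> _ [z _ <-]; exact: ed_ge0].
have dpm0 : dp <= m0 by rewrite le_min !dp_le.
have Cp : C p by apply: hAC.
have [L [dpL HL]] : exists L, dp < L /\ forall r, r < L -> (r%:E < lfs C p)%E.
  have := hsample p Cp; rewrite -/dp.
  case E: (lfs C p) => [r| |].
  - rewrite -EFinM lte_fin => h; exists r; split; last by move=> r' hr; rewrite lte_fin.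
    have r0 : 0 < r by rewrite -(pmulr_rgt0 _ heps0); lra.
    nra.
  - by move=> _; exists (dp + 1); split; [lra | move=> r' _; exact: ltry].
  - by rewrite mulrNy gtr0_sg // mul1e.
have KL : forall s, S s -> s <> a -> s <> b -> eucl_dist p s < L -> m0 < eucl_dist p s.
  move=> s Ss sa sb sL; rewrite ltNge; apply/negP => hle.
  have hsl := HL _ sL.
  have Cs : C s by apply: hSC.
  have hsD : D s by case: (hCAD s Cs) => // /(hsA s Ss sa sb).
  set x := fun l : R => p + l *: (s - p).
  have xE : forall l i, x l ord0 i = p ord0 i + l * (s ord0 i - p ord0 i).
    by move=> l i; rewrite /x !mxE.
  have dxx : forall l l', eucl_dist (x l) (x l') = `|l - l'| * eucl_dist s p.
    by move=> l l'; apply: ed_scale => i; rewrite !xE; ring.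
  have dpx : forall l, eucl_dist p (x l) = `|l| * eucl_dist p s.
    by move=> l; apply: ed_scale => i; rewrite !xE; ring.
  have dxs : forall l, eucl_dist (x l) s = `|1 - l| * eucl_dist p s.
    by move=> l; apply: ed_scale => i; rewrite !xE; ring.
  set h := fun l => gA (x l) - gD (x l).
  have hcont : continuous h.
    apply: (@lip_continuous _ h (2 * eucl_dist s p)) => l l'.
    have := lip A hasA (x l) (x l'); have := lip D hasD (x l) (x l').
    rewrite dxx /h /gA /gD; set u1 := dist_to (x l) A; set u2 := dist_to (x l') A.
    set v1 := dist_to (x l) D; set v2 := dist_to (x l') D.
    rewrite !ler_norml => /andP [? ?] /andP [? ?].
    apply/andP; split; nra.
  have x0 : x 0 = p by rewrite /x scale0r addr0.
  have x1 : x 1 = s by rewrite /x scale1r addrC subrK.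
  have h0 : h 0 < 0.
    rewrite /h x0 /gA /gD (dist0 _ hasA _ hpA) sub0r oppr_lt0.
    exact: distpos.
  have h1 : 0 < h 1.
    rewrite /h x1 /gA /gD (dist0 _ hasD _ hsD) subr0.
    exact: (distpos _ hasA _ (hsA s Ss sa sb)).
  have [l hl hl0] : exists2 l, l \in `[0, 1] & h l = 0.
    apply: IVT => //; first exact: continuous_subspaceT.
    apply/andP; split.
      by rewrite ge_min (ltW h0).
    by rewrite le_max (ltW h1) orbT.
  move: hl; rewrite /= in_itv /= => /andP [l0 l1].
  set xx := x l.
  have [cA hcA] := hasA xx; have [cD hcD] := hasD xx.
  have eAD : eucl_dist xx cA = eucl_dist xx cD.
    rewrite -(dist_closest hcA) -(dist_closest hcD).
    by move: hl0; rewrite /h /gA /gD => /eqP; rewrite subr_eq0 => /eqP.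
  have clA : closest C xx cA.
    split; first by apply: hAC; case: hcA.
    move=> z /hCAD [Az|Dz]; first by case: hcA => _; apply.
    by rewrite eAD; case: hcD => _; apply.
  have clD : closest C xx cD.
    split; first by apply: hDC; case: hcD.
    move=> z /hCAD [Az|Dz]; last by case: hcD => _; apply.
    by rewrite -eAD; case: hcA => _; apply.
  have nM : ~ medial_axis C xx.
    move=> hM.
    have : (lfs C p <= (eucl_dist p xx)%:E)%E.
      by apply: ereal_inf_lbound; exists xx.
    rewrite /xx dpx ger0_norm //.
    have : `|l| * eucl_dist p s <= eucl_dist p s.
      rewrite ger0_norm //; rewrite -[X in _ <= X]mul1r; apply: ler_wpM2r => //.
      exact: ed_ge0.
    move=> H1 H2; move: hsl; rewrite ltNge; apply/negP/negPn.
    apply: le_trans H2 _; rewrite lee_fin; apply: le_trans H1; rewrite ger0_norm //.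
  have [w [hw huniq]] : exists! c, closest C xx c by apply: contrapT.
  have eA : cA = cD by rewrite -(huniq _ clA) (huniq _ clD).
  have cab : cA = a \/ cA = b.
    by apply: hAD; [case: hcA | rewrite eA; case: hcD].
  have hlt : eucl_dist xx cA < eucl_dist xx s.
    rewrite lt_neqAle; apply/andP; split; last by case: clA => _; apply.
    apply/eqP => e.
    have cls : closest C xx s.
      by split => // z Cz; rewrite -e; case: clA => _; apply.
    have : cA = s by rewrite -(huniq _ clA) (huniq _ cls).
    by case: cab => -> ?; [apply: sa|apply: sb].
  have tri := ed_triangle p xx cA.
  have hm : m0 <= eucl_dist p cA by case: cab => ->; rewrite ge_min lexx ?orbT.
  move: hlt tri; rewrite /xx dxs dpx (ger0_norm l0) ger0_norm; last lra.
  move=> ? ?.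
  have : eucl_dist p cA < eucl_dist p s by nra.
  lra.
split.
  apply/eqP; rewrite eq_le dpm0 /=; rewrite leNgt; apply/negP => hlt.
  have ne : [set eucl_dist p y | y in S] !=set0 by exists (eucl_dist p a), a.
  have hmin : dp < Num.min m0 L by rewrite lt_min hlt dpL.
  have [_ [y Sy <-] hy] := @inf_lt _ [set eucl_dist p y | y in S] (Num.min m0 L) ne hmin.
  move: hy; rewrite lt_min => /andP [hy1 hy2].
  have ya : y <> a by move=> e; move: hy1; rewrite e ltNge ge_min lexx.
  have yb : y <> b by move=> e; move: hy1; rewrite e ltNge ge_min lexx orbT.
  have := KL y Sy ya yb hy2; lra.
move=> s Ss sa sb.
have [sL|Ls] := ltP (eucl_dist p s) L.
  by apply: le_lt_trans dpm0 (KL s Ss sa sb sL).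
exact: lt_le_trans dpL Ls.
Qed.
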